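(* There is a constant $C$ such that for every two NFAs $A$ and $B$, each with at most $n$ states and over a common alphabet of $m$ input letters, there exist two DFAs $A'$ and $B'$ with at most $C n^2$ states and over an alphabet of at most $C(m+n)$ letters such that, for every $r\ge 1$, there is a tower of height $r$ between $L(A)$ and $L(B)$ if and only if there is a tower of height $r$ between $L(A')$ and $L(B')$. In particular, there is an infinite tower between $L(A)$ and $L(B)$ if and only if there is an infinite tower between $L(A')$ and $L(B')$.
   Context: For strings $v=a_1\cdots a_k$ and $w$, $v\preccurlyeq w$ if $w\in\Sigma^*a_1\Sigma^*a_2\Sigma^*\cdots\Sigma^*a_k\Sigma^*$. A sequence $(w_i)_{i=1}^r$ of strings is a tower between languages $K$ and $L$ if $w_1\in K\cup L$ and for all $i=1,\dots,r-1$: $w_i\preccurlyeq w_{i+1}$, $w_i\in K$ implies $w_{i+1}\in L$, and $w_i\in L$ implies $w_{i+1}\in K$; $r$ is its height. An infinite tower is an infinite sequence with the same properties. *)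

(* Defs.v *)
From mathcomp Require Import all_boot.
Set Implicit Arguments. Unset Strict Implicit. Unset Printing Implicit Defensive.

Record nfa (m k : nat) := Nfa {
  nfa_init  : {set 'I_k};
  nfa_final : {set 'I_k};
  nfa_trans : 'I_k -> 'I_m -> {set 'I_k}
}.

Fixpoint nfa_run (m k : nat) (A : nfa m k) (S : {set 'I_k}) (w : seq 'I_m)
  : {set 'I_k} :=
  match w with
  | [::] => S
  | a :: w' => nfa_run A (\bigcup_(q in S) nfa_trans A q a) w'
  end.

Definition lang (m k : nat) (A : nfa m k) : pred (seq 'I_m) :=
  fun w => [exists q, (q \in nfa_run A (nfa_init A) w) && (q \in nfa_final A)].

(* A DFA is an NFA with at most one initial state and at most one successor
   per state and letter (possibly partial transition function). *)
Definition is_dfa (m k : nat) (A : nfa m k) : Prop :=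
  #|nfa_init A| <= 1 /\ forall q a, #|nfa_trans A q a| <= 1.

(* Subsequence order: v ≼ w is mathcomp's [subseq v w]. *)

(* (w_1, ..., w_r) = (w 0, ..., w (r-1)) is a tower of height r between K and L *)
Definition tower (T : eqType) (K L : pred (seq T)) (w : nat -> seq T) (r : nat)
  : Prop :=
  (K (w 0) \/ L (w 0)) /\
  forall i, i.+1 < r ->
    [/\ subseq (w i) (w i.+1),
        (K (w i) -> L (w i.+1)) &
        (L (w i) -> K (w i.+1))].

Definition inf_tower (T : eqType) (K L : pred (seq T)) (w : nat -> seq T) : Prop :=
  (K (w 0) \/ L (w 0)) /\
  forall i,
    [/\ subseq (w i) (w i.+1),
        (K (w i) -> L (w i.+1)) &
        (L (w i) -> K (w i.+1))].

(* Main.v *)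
From Stdlib Require Import Classical ClassicalEpsilon.
Require Import Defs.
From mathcomp Require Import all_boot.
From mathcomp Require Import zify.
Set Implicit Arguments. Unset Strict Implicit. Unset Printing Implicit Defensive.

Definition towerD (T : eqType) (K L : pred (seq T)) (w : nat -> seq T) (D : nat -> bool) : Prop :=
  (K (w 0) \/ L (w 0)) /\
  forall i, D i.+1 ->
    [/\ subseq (w i) (w i.+1), (K (w i) -> L (w i.+1)) & (L (w i) -> K (w i.+1))].

Definition pat (T : eqType) (K L : pred (seq T)) (b : bool) (i : nat) : pred (seq T) :=
  if odd i (+) b then L else K.

Definition chainD (T : eqType) (K L : pred (seq T)) (w : nat -> seq T) (D : nat -> bool) b :=
  (forall i, D i -> pat K L b i (w i)) /\ (forall i, D i.+1 -> subseq (w i) (w i.+1)).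

Lemma tower_chain (T : eqType) (K L : pred (seq T)) w (D : nat -> bool)
  (Ddn : forall i, D i.+1 -> D i) :
  towerD K L w D -> exists b, chainD K L w D b.
Proof.
case=> h0 hs; exists (~~ K (w 0)); split; last by move=> i /hs [].
elim=> [|i IH] Di.
  rewrite /pat /=; case: (boolP (K (w 0))) => //= hK.
  by case: h0 => //; rewrite (negbTE hK).
have := IH (Ddn _ Di); case: (hs i Di) => _ hKL hLK.
rewrite /pat /= addNb; case: (odd i (+) ~~ K (w 0)) => /=; auto.
Qed.

Lemma chain_tower (T : eqType) (K L : pred (seq T)) w (D : nat -> bool)
  (D0 : D 0) (Ddn : forall i, D i.+1 -> D i) b :
  chainD K L w D b -> exists w', towerD K L w' D.
Proof.
case=> hp hs.
case: (classic (exists j, D j /\ K (w j) /\ L (w j))) => [[j [Dj [hK hL]]]|hn].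
  exists (fun _ => w j); split; first by left.
  by move=> i _; split => //; apply: subseq_refl.
exists w; split.
  by have := hp 0 D0; rewrite /pat /=; destruct b => /=; auto.
move=> i Di; have Di' := Ddn _ Di; split; first exact: hs.
  have hi := hp i Di'; have hi1 := hp i.+1 Di; move: hi hi1.
  rewrite /pat /= addNb; case: (odd i (+) b) => /= hi hi1 h //;
  by exfalso; apply: hn; exists i.
have hi := hp i Di'; have hi1 := hp i.+1 Di; move: hi hi1.
rewrite /pat /= addNb; case: (odd i (+) b) => /= hi hi1 h //;
by exfalso; apply: hn; exists i.
Qed.

Lemma chain_map (T T' : eqType) (pi : seq T' -> seq T) (K L : pred (seq T)) (K' L' : pred (seq T')) w D b :
  (forall u v, subseq u v -> subseq (pi u) (pi v)) ->
  (forall u, K' u -> K (pi u)) -> (forall u, L' u -> L (pi u)) ->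
  chainD K' L' w D b -> chainD K L (fun i => pi (w i)) D b.
Proof.
move=> hm hK hL [hp hs]; split; last by move=> i /hs /hm.
by move=> i /hp; rewrite /pat; case: ifP => _; auto.
Qed.

Definition lf (T T' : eqType) (pi : seq T' -> seq T) (P : pred (seq T')) (u : seq T') (v : seq T) : seq T' :=
  epsilon (inhabits [::]) (fun u' => subseq u u' /\ pi u' = v /\ P u').

Lemma lf_spec (T T' : eqType) (pi : seq T' -> seq T) (P : pred (seq T')) u v :
  (exists u', subseq u u' /\ pi u' = v /\ P u') ->
  subseq u (lf pi P u v) /\ pi (lf pi P u v) = v /\ P (lf pi P u v).
Proof. move=> h; exact: (epsilon_spec (inhabits [::]) _ h). Qed.

Fixpoint Wseq (T T' : eqType) (pi : seq T' -> seq T) (K' L' : pred (seq T')) b (w : nat -> seq T) i :=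
  match i with
  | 0 => lf pi (pat K' L' b 0) [::] (w 0)
  | j.+1 => lf pi (pat K' L' b j.+1) (Wseq pi K' L' b w j) (w j.+1)
  end.

Lemma chain_lift (T T' : eqType) (pi : seq T' -> seq T) (K L : pred (seq T)) (K' L' : pred (seq T')) w (D : nat -> bool) b
  (Ddn : forall i, D i.+1 -> D i) :
  pi [::] = [::] ->
  (forall v u, K v -> subseq (pi u) v -> exists u', subseq u u' /\ pi u' = v /\ K' u') ->
  (forall v u, L v -> subseq (pi u) v -> exists u', subseq u u' /\ pi u' = v /\ L' u') ->
  chainD K L w D b -> exists w', chainD K' L' w' D b.
Proof.
move=> h0 hK hL [hp hs].
have ex : forall i v u, pat K L b i v -> subseq (pi u) v ->
   exists u', subseq u u' /\ pi u' = v /\ pat K' L' b i u'.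
  by move=> i v u; rewrite /pat; case: ifP => _; auto.
have P : forall i, D i -> pi (Wseq pi K' L' b w i) = w i /\ pat K' L' b i (Wseq pi K' L' b w i).
  elim=> [|i IH] Di /=.
    have [_ [-> ->]] := lf_spec (ex 0 (w 0) [::] (hp 0 Di) ltac:(by rewrite h0 sub0seq)).
    by [].
  have [e _] := IH (Ddn _ Di).
  have [_ [-> ->]] := lf_spec (ex i.+1 (w i.+1) (Wseq pi K' L' b w i) (hp _ Di) ltac:(by rewrite e; apply: hs)).
  by [].
exists (Wseq pi K' L' b w); split; first by move=> i /P [].
move=> i Di /=; have [e _] := P i (Ddn _ Di).
by have [-> _] := lf_spec (ex i.+1 (w i.+1) (Wseq pi K' L' b w i) (hp _ Di) ltac:(by rewrite e; apply: hs)).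
Qed.

Lemma tower_equiv (T T' : eqType) (pi : seq T' -> seq T) (K L : pred (seq T)) (K' L' : pred (seq T')) (D : nat -> bool)
  (D0 : D 0) (Ddn : forall i, D i.+1 -> D i) :
  pi [::] = [::] ->
  (forall u v, subseq u v -> subseq (pi u) (pi v)) ->
  (forall u, K' u -> K (pi u)) -> (forall u, L' u -> L (pi u)) ->
  (forall v u, K v -> subseq (pi u) v -> exists u', subseq u u' /\ pi u' = v /\ K' u') ->
  (forall v u, L v -> subseq (pi u) v -> exists u', subseq u u' /\ pi u' = v /\ L' u') ->
  (exists w, towerD K L w D) <-> (exists w, towerD K' L' w D).
Proof.
move=> h0 hm hK1 hL1 hK2 hL2; split.
  case=> w /(tower_chain Ddn) [b hc].
  have [w' hc'] := chain_lift Ddn h0 hK2 hL2 hc.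
  exact (chain_tower D0 Ddn hc').
case=> w /(tower_chain Ddn) [b hc].
exact (chain_tower D0 Ddn (chain_map hm hK1 hL1 hc)).
Qed.

Lemma subseq_pmap (T T' : eqType) (f : T' -> option T) (u v : seq T') :
  subseq u v -> subseq (pmap f u) (pmap f v).
Proof.
elim: v u => [|c v IH] [|c' u] //=; first by rewrite sub0seq.
case: eqP => [-> /IH|_ /IH h].
  by case: (f c) => [a|] //= h; rewrite eqxx.
apply: (subseq_trans h) => /=; case: (f c) => [a|] //=; exact: subseq_cons.
Qed.

Definition proj (m n : nat) (c : 'I_(m + n)) : option 'I_m :=
  match split c with inl a => Some a | inr _ => None end.

Lemma split_l (m n : nat) (a : 'I_m) : split (lshift n a) = inl a.
Proof. exact: (unsplitK (inl a)). Qed.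
Lemma split_r (m n : nat) (p : 'I_n) : split (rshift m p) = inr p.
Proof. exact: (unsplitK (inr p)). Qed.

Definition pi (m n : nat) (u : seq 'I_(m + n)) : seq 'I_m := pmap (@proj m n) u.

Lemma pi_cat (m n : nat) (u v : seq 'I_(m + n)) : pi (u ++ v) = pi u ++ pi v.
Proof. exact: pmap_cat. Qed.

Lemma run_union (m k : nat) (A : nfa m k) S w f :
  (f \in nfa_run A S w) = [exists p, (p \in S) && (f \in nfa_run A [set p] w)].
Proof.
elim: w S => [|a w IH] S /=.
  apply/idP/existsP => [h|[p /andP [hp]]]; first by exists f; rewrite h in_set1 eqxx.
  by rewrite in_set1 => /eqP ->.
rewrite IH; apply/existsP/existsP => [[p /andP [/bigcupP [q hq hpq] hf]]|[q /andP [hq]]].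
  exists q; rewrite hq /= IH; apply/existsP; exists p; rewrite hf andbT.
  by apply/bigcupP; exists q => //; rewrite in_set1.
rewrite IH => /existsP [p /andP [/bigcupP [q' hq' hp] hf]].
move: hq'; rewrite in_set1 => /eqP ?; subst q'.
by exists p; rewrite hf andbT; apply/bigcupP; exists q.
Qed.

Definition ST (k : nat) := (option 'I_k * option 'I_k)%type.

Definition Sset (m k : nat) (A : nfa m k) (x : option 'I_k) : {set 'I_k} :=
  match x with None => nfa_init A | Some q => [set q] end.

Definition step (m n k : nat) (A : nfa m k) (s : ST k) (c : 'I_(m + n)) : option (ST k) :=
  let: (x, y) := s in
  match split c with
  | inr p => Some (x, insub (val p))
  | inl a => match y with
             | Some p => if p \in nfa_run A (Sset A x) [:: a] then Some (Some p, None) else None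
             | None => None
             end
  end.

Definition acc (m k : nat) (A : nfa m k) (s : ST k) : bool :=
  [exists q, (q \in Sset A s.1) && (q \in nfa_final A)].

Fixpoint drun (m n k : nat) (A : nfa m k) (s : ST k) (u : seq 'I_(m + n)) : option (ST k) :=
  match u with
  | [::] => Some s
  | c :: u' => match step A s c with Some s' => drun A s' u' | None => None end
  end.

Definition accd (m n k : nat) (A : nfa m k) (s : ST k) (u : seq 'I_(m + n)) : bool :=
  if drun A s u is Some s' then acc A s' else false.

Lemma sound (m n k : nat) (A : nfa m k) (u : seq 'I_(m + n)) x y :
  accd A (x, y) u -> exists f, f \in nfa_run A (Sset A x) (pi u) /\ f \in nfa_final A.
Proof.
rewrite /accd; elim: u x y => [|c u IH] x y /=.
  by move=> /existsP [q /andP [h1 h2]]; exists q.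
rewrite /pi /= /proj; case: (split c) => [a|p] /=; last exact: IH.
case: y => [p|] //; case: ifP => // hp /IH [f [hf hF]].
exists f; split => //; rewrite run_union; apply/existsP; exists p.
by rewrite hp.
Qed.

Lemma drun_st (m n k : nat) (A : nfa m k) (u1 v : seq 'I_(m + n)) x y :
  pi u1 = [::] -> exists y', drun A (x, y) (u1 ++ v) = drun A (x, y') v.
Proof.
elim: u1 y => [|c u IH] y /=; first by exists y.
rewrite /pi /= /proj; case: (split c) => [a|p] //= h.
exact: IH.
Qed.

Lemma dec (m n : nat) (u : seq 'I_(m + n)) a w :
  subseq (pi u) (a :: w) ->
  subseq (pi u) w \/
  exists u1 u2, u = u1 ++ lshift n a :: u2 /\ pi u1 = [::] /\ subseq (pi u2) w.
Proof.
elim: u => [|c u IH]; first by left; rewrite sub0seq.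
rewrite {1 2}/pi /= /proj.
have Ec := splitK c.
case: (split c) Ec => [b|p] Ec /=.
  case: eqP => [eb h|_ h]; last by left.
  by right; exists [::], u; rewrite -Ec eb.
case/IH => [h|[u1 [u2 [-> [h1 h2]]]]]; first by left.
by right; exists (c :: u1), u2; split => //; rewrite /pi /= /proj -Ec unsplitK.
Qed.

Lemma lift (m n k : nat) (A : nfa m k) (hk : k <= n) (w : seq 'I_m) :
  forall x y (u : seq 'I_(m + n)),
  (exists f, f \in nfa_run A (Sset A x) w /\ f \in nfa_final A) ->
  subseq (pi u) w ->
  exists u', subseq u u' /\ pi u' = w /\ accd A (x, y) u'.
Proof.
elim: w => [|a w IH] x y u [f [hf hF]].
  rewrite subseq0 => /eqP hu; exists u; split; first exact: subseq_refl.
  split => //; have [y' e] := drun_st A [::] x y hu.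
  rewrite /accd cats0 in e *; rewrite e /=.
  by apply/existsP; exists f; rewrite hF andbT.
move: hf; rewrite /= run_union => /existsP [p /andP [hp hf]].
have hp' : p \in nfa_run A (Sset A x) [:: a] by [].
set lp := rshift m (widen_ord hk p).
set la := lshift n a.
have key : forall y0 u'', drun A (x, y0) (lp :: la :: u'') = drun A (Some p, None) u''.
  move=> y0 u''; rewrite /= /lp /la split_r /= valK /step split_l.
  by rewrite hp'.
have kpi : forall u'', pi (lp :: la :: u'') = a :: pi u''.
  by move=> u''; rewrite /pi /= /proj /lp /la split_r split_l.
case/dec => [h|[u1 [u2 [-> [h1 h2]]]]].
  have [u'' [s1 [s2 s3]]] := IH (Some p) None u (ex_intro _ f (conj hf hF)) h.
  exists (lp :: la :: u''); split.
    by apply: (subseq_trans s1); apply: (subseq_trans (subseq_cons _ la)); apply: subseq_cons.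
  by rewrite kpi s2 /accd key.
have [u'' [s1 [s2 s3]]] := IH (Some p) None u2 (ex_intro _ f (conj hf hF)) h2.
exists (u1 ++ lp :: la :: u''); split.
  apply: cat_subseq; first exact: subseq_refl.
  apply: (subseq_trans _ (subseq_cons _ lp)) => /=; rewrite eqxx; exact: s1.
split; first by rewrite pi_cat h1 (kpi u'') s2.
have [y' e] := drun_st A (lp :: la :: u'') x y h1.
by rewrite /accd e key.
Qed.

Definition mkA (m n k : nat) (A : nfa m k) : nfa (m + n) #|{: ST k}| :=
  Nfa [set enum_rank ((None, None) : ST k)] [set i | acc A (enum_val i)]
      (fun i c => if step (n := n) A (enum_val i) c is Some s then [set enum_rank s] else set0).

Lemma run0 (m k : nat) (B : nfa m k) u : nfa_run B set0 u = set0.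
Proof. by elim: u => [|a u IH] //=; rewrite big_set0. Qed.

Lemma runT (m n k : nat) (A : nfa m k) (u : seq 'I_(m + n)) (s : ST k) :
  nfa_run (mkA n A) [set enum_rank s] u =
  if drun A s u is Some s' then [set enum_rank s'] else set0.
Proof.
elim: u s => [|c u IH] s //=.
rewrite big_set1 enum_rankK; case: (step A s c) => [s'|] //.
exact: run0.
Qed.

Lemma lang_mk (m n k : nat) (A : nfa m k) (u : seq 'I_(m + n)) :
  lang (mkA n A) u = accd A (None, None) u.
Proof.
rewrite /lang /accd runT; case: (drun A _ u) => [s'|].
  apply/existsP/idP => [[q /andP [/set1P -> ]]|h].
    by rewrite inE enum_rankK.
  by exists (enum_rank s'); rewrite set11 inE enum_rankK.
by apply/existsP => [[q /andP [] ]]; rewrite inE.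
Qed.

Lemma sound' (m n k : nat) (A : nfa m k) (u : seq 'I_(m + n)) :
  lang (mkA n A) u -> lang A (pi u).
Proof.
rewrite lang_mk => /sound [f [h1 h2]].
by apply/existsP; exists f; rewrite h1 h2.
Qed.

Lemma lift' (m n k : nat) (A : nfa m k) (hk : k <= n) (w : seq 'I_m) (u : seq 'I_(m + n)) :
  lang A w -> subseq (pi u) w -> exists u', subseq u u' /\ pi u' = w /\ lang (mkA n A) u'.
Proof.
move=> /existsP [f /andP [h1 h2]] hs.
have [u' [s1 [s2 s3]]] := lift hk (x := None) None (ex_intro _ f (conj h1 h2)) hs.
by exists u'; rewrite lang_mk.
Qed.

Lemma dfa_mk (m n k : nat) (A : nfa m k) : is_dfa (mkA n A).
Proof.
split; first by rewrite /= cards1.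
by move=> q a /=; case: (step A _ a) => [s|]; rewrite ?cards1 ?cards0.
Qed.

Lemma card_ST k : #|{: ST k}| = k.+1 * k.+1.
Proof. by rewrite card_prod card_option card_ord. Qed.

Lemma inf_towerD (T : eqType) (K L : pred (seq T)) w :
  inf_tower K L w <-> towerD K L w (fun _ => true).
Proof. by split; case=> h0 h; split => // i; apply: h. Qed.

Theorem theorem12 :
  exists C : nat,
  forall (m n kA kB : nat) (A : nfa m kA) (B : nfa m kB),
    kA <= n -> kB <= n ->
    exists (m' kA' kB' : nat) (A' : nfa m' kA') (B' : nfa m' kB'),
      is_dfa A' /\ is_dfa B' /\
          kA' <= C * n ^ 2 /\ kB' <= C * n ^ 2 /\
          m' <= C * (m + n) /\
          (forall r : nat, 1 <= r ->
             (exists w, tower (lang A) (lang B) w r) <->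
             (exists w, tower (lang A') (lang B') w r)) /\
          ((exists w, inf_tower (lang A) (lang B) w) <->
           (exists w, inf_tower (lang A') (lang B') w)).
Proof.
exists 4 => m n kA kB A B.
case: n => [|n] hA hB.
  have eA : kA = 0 by lia.
  have eB : kB = 0 by lia.
  exists m, kA, kB, A, B.
  split; first by split => [|q a]; rewrite (leq_trans (max_card _)) // card_ord eA.
  split; first by split => [|q a]; rewrite (leq_trans (max_card _)) // card_ord eB.
  do 3 (split; first lia).
  by split.
refine (ex_intro _ (m + n.+1) (ex_intro _ #|{: ST kA}| (ex_intro _ #|{: ST kB}| (ex_intro _ (mkA n.+1 A) (ex_intro _ (mkA n.+1 B) _))))).
split; first exact: dfa_mk.
split; first exact: dfa_mk.
split; first by rewrite card_ST; nia.
split; first by rewrite card_ST; nia.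
split; first lia.
have mono := @subseq_pmap _ _ (@proj m n.+1).
split.
  move=> r hr.
  exact: (@tower_equiv _ _ (@pi m n.+1) _ _ _ _ (fun i => i < r) hr (fun i h => ltnW h)
            erefl mono (@sound' _ _ _ A) (@sound' _ _ _ B) (lift' hA) (lift' hB)).
have E := (@tower_equiv _ _ (@pi m n.+1) (lang A) (lang B) (lang (mkA n.+1 A)) (lang (mkA n.+1 B)) (fun _ => true) erefl (fun _ _ => erefl)
            erefl mono (@sound' _ _ _ A) (@sound' _ _ _ B) (lift' hA) (lift' hB)).
split.
  case=> w /inf_towerD h; have [w' /inf_towerD h'] := proj1 E (ex_intro _ w h); by exists w'.
case=> w /inf_towerD h; have [w' /inf_towerD h'] := proj2 E (ex_intro _ w h); by exists w'.
Qed.
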